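(* Let $k\ge 0$ be an integer and let $a,b,c\in\mathbb{C}$ be such that no lower parameter below is a nonpositive integer (in particular $b,c\notin\{0,-1,-2,\dots\}$ and $1+a-b,1+a-c\notin\{0,-1,-2,\dots\}$). Define $$Q_k^{(2)}(n;a;b,c)={}_3F_2\!\left[\begin{matrix}-n,\ n+a,\ -k\\ b,\ c\end{matrix}\,\Big|\,1\right]=\sum_{j=0}^{k}\frac{(-n)_j(n+a)_j(-k)_j}{j!\,(b)_j(c)_j},$$ which is a polynomial of degree $2k$ in $n$ (and of degree $k$ in $\lambda=n(n+a)$). Then, as an identity of analytic functions in a neighborhood of $x=0$, $${}_3F_2\!\left[\begin{matrix}\tfrac a2,\ \tfrac12+\tfrac a2,\ 1-k+a-b-c\\ 1+a-b,\ 1+a-c\end{matrix}\,\Big|\,-\frac{4x}{(1-x)^2}\right]=(1-x)^a\sum_{n=0}^\infty\frac{(a)_n(b)_n(c)_n}{n!\,(1+a-b)_n(1+a-c)_n}\,Q_k^{(2)}(n;a;b,c)\,x^n .$$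
   Context: $(c)_n=c(c+1)\cdots(c+n-1)$, $(c)_0=1$, denotes the Pochhammer symbol. ${}_{p}F_{q}\!\left[\begin{smallmatrix}a_1,\dots,a_p\\ b_1,\dots,b_q\end{smallmatrix}\,\big|\,x\right]=\sum_{n\ge0}\frac{(a_1)_n\cdots(a_p)_n}{n!(b_1)_n\cdots(b_q)_n}x^n$ is the generalized hypergeometric series. Equivalently, the right-hand series equals a ${}_{3+2k}F_{2+2k}$ with extra upper parameters $1+\xi_i$ and lower parameters $\xi_i$, where $\xi_1,\dots,\xi_{2k}$ are the negated roots of $Q_k^{(2)}$. *)

(* Defs.v *)
(* Formal power series are represented by coefficient
   sequences nat -> C over a numeric algebraically closed field C
   (the MathComp abstraction of the complex numbers). *)
From HB Require Import structures.
From mathcomp Require Import all_boot all_order all_algebra.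
Set Implicit Arguments. Unset Strict Implicit. Unset Printing Implicit Defensive.
Import Order.TTheory GRing.Theory Num.Theory.
Local Open Scope ring_scope.

Section Defs.
Variable R : fieldType.

Definition poch (x : R) (n : nat) : R := \prod_(i < n) (x + i%:R).

Definition hyp_coef (us ls : seq R) (n : nat) : R :=
  (\prod_(u <- us) poch u n) / (n`!%:R * \prod_(l <- ls) poch l n).

Definition Q2 (k n : nat) (a b c : R) : R :=
  \sum_(j < k.+1) hyp_coef [:: - n%:R; n%:R + a; - k%:R] [:: b; c] j.

Definition fps := nat -> R.
Definition fps_one : fps := fun n => (n == 0%N)%:R.
Definition fps_mul (f g : fps) : fps :=
  fun n => \sum_(i < n.+1) f i * g (n - i)%N.
Definition fps_exp (f : fps) (m : nat) : fps := iter m (fps_mul f) fps_one.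
(* composition F(g(x)), meaningful when g has zero constant term *)
Definition fps_comp (F g : fps) : fps :=
  fun N => \sum_(m < N.+1) F m * fps_exp g m N.
Definition fps_1mX_pow (s : R) : fps := fun j => poch (- s) j / j`!%:R.
Definition fps_X : fps := fun n => (n == 1%N)%:R.
Definition fps_scale (c : R) (f : fps) : fps := fun n => c * f n.
Definition fps_hyp (us ls : seq R) : fps := hyp_coef us ls.
End Defs.

(* Main.v *)
Require Import Defs.
From HB Require Import structures.
From mathcomp Require Import all_boot all_order all_algebra.
From mathcomp Require Import ring lra.
From Stdlib Require Import FunctionalExtensionality.
Import Order.TTheory GRing.Theory Num.Theory.
Set Implicit Arguments. Unset Strict Implicit. Unset Printing Implicit Defensive.
Local Open Scope ring_scope.

Module NatIds.
From mathcomp Require Import zify.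
Lemma natid1 N i l : (i <= N)%N -> (N + (i + l) = 2 * i + (N - i + l))%N.
Proof. move=> h; lia. Qed.
Lemma natid2 N i : (i <= N)%N -> (2 * i + (N - i) = N + i)%N.
Proof. move=> h; lia. Qed.
Lemma natid3 N i : (i <= N)%N -> N = (i + (N - i))%N.
Proof. move=> h; lia. Qed.

End NatIds.
Import NatIds.


Section Poch.
Variable C : numFieldType.
Implicit Types (x y : C).

Lemma poch0 x : poch x 0 = 1.
Proof. by rewrite /poch big_ord0. Qed.

Lemma pochS x n : poch x n.+1 = poch x n * (x + n%:R).
Proof. by rewrite /poch big_ord_recr. Qed.

Lemma pochSl x n : poch x n.+1 = x * poch (x + 1) n.
Proof.
rewrite /poch big_ord_recl /= addr0; congr (_ * _).
by apply: eq_bigr => i _; rewrite /bump /= add1n -nat1r addrA.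
Qed.

Lemma pochD x m n : poch x (m + n) = poch x m * poch (x + m%:R) n.
Proof.
rewrite /poch big_split_ord /=; congr (_ * _).
by apply: eq_bigr => i _; rewrite natrD addrA.
Qed.

Lemma poch_negn (M l : nat) : (M < l)%N -> poch (- M%:R) l = 0 :> C.
Proof.
move=> Ml; rewrite -(subnKC Ml) pochD pochS addNr.
by rewrite mulr0 mul0r.
Qed.

Lemma fact_neq0 n : (n`!%:R : C) != 0.
Proof. by rewrite pnatr_eq0 -lt0n fact_gt0. Qed.

Lemma poch_neq0 x n : (forall m : nat, x != - m%:R) -> poch x n != 0.
Proof.
move=> hx; rewrite /poch; apply/prodf_neq0 => i _.
by rewrite addr_eq0; apply: hx.
Qed.
End Poch.


Section Saal.
Variable C : numFieldType.
Variables (a p q : C).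
Hypothesis hp : forall m : nat, p != - m%:R.
Hypothesis hq : forall m : nat, q != - m%:R.

Let e := p + q - 1 - a.

Definition SF (M l : nat) : C := poch (- M%:R) l * poch a (M + l) * poch e l /
   (l`!%:R * poch p l * poch q l).

Definition SG (M l : nat) : C := - (1 + a + 2%:R * M%:R) / (M.+1%:R) *
   (poch (- M.+1%:R) l * poch a (M + l) * poch e l) *
   (l%:R * (p + l%:R - 1) * (q + l%:R - 1)) / (l`!%:R * poch p l * poch q l).

Lemma addn_neq0 (x : C) (n : nat) : (forall m : nat, x != - m%:R) -> x + n%:R != 0.
Proof. by move=> h; rewrite addr_eq0. Qed.

Lemma SF_term M l :
  (p + M%:R) * (q + M%:R) * SF M.+1 l
  - (a + M%:R) * (1 + a - p + M%:R) * (1 + a - q + M%:R) * SF M l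
  = SG M l.+1 - SG M l.
Proof.
have hW : poch (- M%:R : C) l = poch (- M.+1%:R) l * (- M.+1%:R + l%:R) / (- M.+1%:R).
  have := @pochSl C (- M.+1%:R) l; rewrite pochS => ->.
  rewrite -natr1 opprD addrNK.
  have hM : (- M%:R - 1 : C) != 0 by rewrite -opprD natr1 oppr_eq0 pnatr_eq0.
  by field.
rewrite /SF /SG hW addSn addnS !pochS factS natrM.
have h1 : (l`!%:R : C) != 0 by apply: fact_neq0.
have h2 : poch p l != 0 by apply: poch_neq0.
have h3 : poch q l != 0 by apply: poch_neq0.
have h4 : p + l%:R != 0 by apply: addn_neq0.
have h5 : q + l%:R != 0 by apply: addn_neq0.
have h6 : (M.+1%:R : C) != 0 by rewrite pnatr_eq0.
have h7 : (l.+1%:R : C) != 0 by rewrite pnatr_eq0.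
move: h1 h2 h3 h4 h5 h6 h7.
set W := poch (- M.+1%:R) l; set V := poch a (M + l); set E := poch e l.
set Fl := (l`!%:R : C); set Pp := poch p l; set Pq := poch q l.
rewrite /e -!natr1 !natrD.
move=> h1 h2 h3 h4 h5 h6 h7.
field.
by rewrite h1 h2 h3 h4 h5 h6 h7.
Qed.

Lemma SF_vanish M : SF M M.+1 = 0.
Proof. by rewrite /SF poch_negn // !mul0r. Qed.

Lemma SG0 M : SG M 0 = 0.
Proof. by rewrite /SG (_ : (0%:R : C) = 0) // !mul0r mulr0 mul0r. Qed.

Lemma SG_end M : SG M M.+2 = 0.
Proof. by rewrite /SG poch_negn // !mul0r !mulr0 !mul0r. Qed.

Lemma SF_rec M :
  (p + M%:R) * (q + M%:R) * \sum_(l < M.+2) SF M.+1 l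
  = (a + M%:R) * (1 + a - p + M%:R) * (1 + a - q + M%:R) * \sum_(l < M.+1) SF M l.
Proof.
apply/eqP; rewrite -subr_eq0; apply/eqP.
rewrite (_ : \sum_(l < M.+1) SF M l = \sum_(l < M.+2) SF M l); last first.
  by rewrite [RHS]big_ord_recr /= SF_vanish addr0.
rewrite !mulr_sumr -sumrB.
rewrite -(big_mkord xpredT (fun l => (p + M%:R) * (q + M%:R) * SF M.+1 l
  - (a + M%:R) * (1 + a - p + M%:R) * (1 + a - q + M%:R) * SF M l)).
rewrite (@telescope_sumr_eq _ _ _ (SG M)) //; last by move=> k _; rewrite SF_term.
by rewrite SG_end SG0 subrr.
Qed.

Lemma saal M : (\sum_(l < M.+1) SF M l) * (poch p M * poch q M)
  = poch a M * poch (1 + a - p) M * poch (1 + a - q) M.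
Proof.
elim: M => [|M IH].
  by rewrite big_ord1 /SF !poch0 /= !mulr1 divr1.
have hpM : p + M%:R != 0 by apply: addn_neq0.
have hqM : q + M%:R != 0 by apply: addn_neq0.
rewrite !pochS.
have -> : \sum_(l < M.+2) SF M.+1 l = (a + M%:R) * (1 + a - p + M%:R) * (1 + a - q + M%:R)
   * (\sum_(l < M.+1) SF M l) / ((p + M%:R) * (q + M%:R)).
  by rewrite -SF_rec; field; rewrite hpM hqM.
move: IH; set S := \sum_(l < M.+1) SF M l => IH.
rewrite (_ : poch a M * (a + M%:R) * (poch (1 + a - p) M * (1 + a - p + M%:R)) *
   (poch (1 + a - q) M * (1 + a - q + M%:R)) =
   (poch a M * poch (1 + a - p) M * poch (1 + a - q) M) * ((a + M%:R) * (1 + a - p + M%:R) * (1 + a - q + M%:R))); last by ring.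
rewrite -IH; field; by rewrite hpM hqM.
Qed.
End Saal.


Section Fps.
Variable C : numFieldType.
Implicit Types (f g h : fps C).

Definition tp (n : nat) (f : fps C) : {poly C} := \poly_(i < n.+1) f i.

Lemma tpM_coef f g n j : (j <= n)%N -> (tp n f * tp n g)`_j = fps_mul f g j.
Proof.
move=> jn; rewrite coefM /fps_mul; apply: eq_bigr => i _.
rewrite /tp !coef_poly.
have hi : (i < n.+1)%N by apply: (leq_trans (ltn_ord i)); rewrite ltnS.
have hji : (j - i < n.+1)%N by rewrite ltnS (leq_trans (leq_subr _ _)).
by rewrite hi hji.
Qed.

Lemma fps_mulC f g : fps_mul f g = fps_mul g f.
Proof.
apply: functional_extensionality => n.
by rewrite -!(@tpM_coef _ _ n n) // mulrC.
Qed.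

Lemma fps_mulA f g h : fps_mul f (fps_mul g h) = fps_mul (fps_mul f g) h.
Proof.
apply: functional_extensionality => n.
transitivity ((tp n f * (tp n g * tp n h))`_n).
  rewrite coefM {1}/fps_mul; apply: eq_bigr => i _.
  rewrite (@tpM_coef g h n (n - i)%N) ?leq_subr // /tp coef_poly.
  by rewrite (ltn_ord i).
rewrite mulrA coefM {2}/fps_mul; apply: eq_bigr => i _.
rewrite tpM_coef; last by rewrite -ltnS.
rewrite /tp coef_poly.
by have -> : (n - i < n.+1)%N by rewrite ltnS leq_subr.
Qed.

Lemma fps_mul1 f : fps_mul (@fps_one C) f = f.
Proof.
apply: functional_extensionality => n.
rewrite /fps_mul big_ord_recl /fps_one /= mul1r subn0 big1 ?addr0 //.
by move=> i _; rewrite mul0r.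
Qed.

Lemma fps_mulZl c f g : fps_mul (fps_scale c f) g = fps_scale c (fps_mul f g).
Proof.
apply: functional_extensionality => n.
by rewrite /fps_mul /fps_scale mulr_sumr; apply: eq_bigr => i _; rewrite mulrA.
Qed.

Lemma fps_mulZr c f g : fps_mul f (fps_scale c g) = fps_scale c (fps_mul f g).
Proof. by rewrite fps_mulC fps_mulZl fps_mulC. Qed.

Lemma fps_scaleM c d f : fps_scale c (fps_scale d f) = fps_scale (c * d) f.
Proof.
by apply: functional_extensionality => n; rewrite /fps_scale mulrA.
Qed.

Definition sh (m : nat) (f : fps C) : fps C :=
  fun N => if (m <= N)%N then f (N - m)%N else 0.

Lemma sh0 f : sh 0 f = f.
Proof. by apply: functional_extensionality => n; rewrite /sh subn0. Qed.

Lemma fps_mul_shl m f g : fps_mul (sh m f) g = sh m (fps_mul f g).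
Proof.
apply: functional_extensionality => N; rewrite /sh /fps_mul.
case: leqP => mN; last first.
  rewrite big1 // => i _.
  have : (i < m)%N by apply: (leq_trans (ltn_ord i)).
  by rewrite ltnNge => /negbTE ->; rewrite mul0r.
rewrite (_ : \sum_(i < N.+1) _ = \sum_(0 <= i < N.+1) (if (m <= i)%N then f (i - m)%N else 0) * g (N - i)%N); last by rewrite big_mkord.
rewrite (big_cat_nat _ (n := m)) //=; last by rewrite ltnW.
rewrite big1_seq ?add0r; last first.
  move=> i /andP[_]; rewrite mem_index_iota => /andP[_ im].
  by rewrite leqNgt im mul0r.
rewrite -{1}(add0n m) big_addn subSn // big_mkord; apply: eq_bigr => i _.
by rewrite leq_addl addnK addnC subnDA.
Qed.

Lemma fps_mul_shr m f g : fps_mul f (sh m g) = sh m (fps_mul f g).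
Proof. by rewrite fps_mulC fps_mul_shl fps_mulC. Qed.

Lemma sh_add i j f : sh i (sh j f) = sh (i + j) f.
Proof.
apply: functional_extensionality => N; rewrite /sh.
case: (leqP i N) => iN.
  rewrite leq_subRL // subnDA.
  by case: leqP.
case: leqP => // ijN.
by have := leq_trans (leq_addr j i) ijN; rewrite leqNgt iN.
Qed.

Lemma sh_scale m c f : sh m (fps_scale c f) = fps_scale c (sh m f).
Proof.
apply: functional_extensionality => N; rewrite /sh /fps_scale.
by case: leqP; rewrite ?mulr0.
Qed.

Lemma fps_X_sh : @fps_X C = sh 1 (@fps_one C).
Proof.
apply: functional_extensionality => N; rewrite /sh /fps_X /fps_one.
by case: N => [|[|N]].
Qed.

End Fps.


Section Vander.
Variable C : numFieldType.

Definition uu (x : C) (n : nat) : C := poch x n / n`!%:R.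

Lemma uuS x n : uu x n.+1 * n.+1%:R = uu x n * (x + n%:R).
Proof.
rewrite /uu pochS factS natrM.
have h1 := @fact_neq0 C n.
have h2 : (n.+1%:R : C) != 0 by rewrite pnatr_eq0.
by field; rewrite h1 nat1r h2.
Qed.

Lemma uu0 x : uu x 0 = 1.
Proof. by rewrite /uu poch0 /= divr1. Qed.

Lemma vander_uu x y n : \sum_(i < n.+1) uu x i * uu y (n - i) = uu (x + y) n.
Proof.
elim: n => [|n IH]; first by rewrite big_ord1 /= !uu0 mulr1.
have hn : (n.+1%:R : C) != 0 by rewrite pnatr_eq0.
apply: (mulIf hn); rewrite uuS -IH mulr_suml.
have E : forall i : 'I_n.+2, uu x i * uu y (n.+1 - i) * n.+1%:R =
   (i%:R * uu x i) * uu y (n.+1 - i) + uu x i * (uu y (n.+1 - i) * (n.+1 - i)%:R).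
  by move=> i; rewrite (natrB _ (ltn_ord i)); ring.
rewrite (eq_bigr _ (fun i _ => E i)) big_split /=.
rewrite [X in X + _]big_ord_recl [X in _ + X]big_ord_recr /= subnn mul0r mul0r add0r mulr0 mulr0 addr0.
rewrite mulr_suml -big_split /=; apply: eq_bigr => i _.
rewrite /bump /= add1n subSS.
have hi : (i <= n)%N by rewrite -ltnS.
rewrite [_ * uu x _]mulrC uuS subSn // uuS.
rewrite (natrB _ hi); ring.
Qed.

Lemma fps_1mX_powE (s : C) j : fps_1mX_pow s j = uu (- s) j.
Proof. by []. Qed.

Lemma P_vander (s t : C) : fps_mul (fps_1mX_pow s) (fps_1mX_pow t) = fps_1mX_pow (s + t).
Proof.
apply: functional_extensionality => n.
by rewrite /fps_mul fps_1mX_powE opprD -vander_uu.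
Qed.

Lemma P_zero : fps_1mX_pow (0 : C) = @fps_one C.
Proof.
apply: functional_extensionality => n; rewrite /fps_1mX_pow /fps_one oppr0.
case: n => [|n]; first by rewrite poch0 /= divr1.
by rewrite pochSl mul0r mul0r.
Qed.

End Vander.


Section Comp.
Variable C : numFieldType.

Definition gg : fps C := fps_scale (- 4%:R) (fps_mul (@fps_X C) (fps_1mX_pow (- 2%:R))).

Lemma fps_scale1 (f : fps C) : fps_scale 1 f = f.
Proof. by apply: functional_extensionality => n; rewrite /fps_scale mul1r. Qed.

Lemma g_exp m : fps_exp gg m = fps_scale ((- 4%:R) ^+ m) (sh m (fps_1mX_pow (- (2 * m)%N%:R))).
Proof.
elim: m => [|m IH].
  by rewrite /fps_exp /= expr0 fps_scale1 sh0 muln0 oppr0 P_zero.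
rewrite /fps_exp iterS -/(fps_exp gg m) IH /gg fps_X_sh fps_mul_shl fps_mul1.
rewrite fps_mulZl fps_mulZr fps_scaleM fps_mul_shl fps_mul_shr sh_add P_vander.
rewrite exprS add1n; congr (fps_scale _ (sh _ (fps_1mX_pow _))).
by rewrite mulnS natrD; ring.
Qed.

Lemma g_exp_zero m n : (n < m)%N -> fps_exp gg m n = 0.
Proof.
by move=> nm; rewrite g_exp /fps_scale /sh leqNgt nm mulr0.
Qed.

Lemma stepB (H : fps C) (a : C) N :
  fps_mul (fps_1mX_pow (- a)) (fps_comp H gg) N =
  \sum_(m < N.+1) H m * ((- 4%:R) ^+ m * uu (a + (2 * m)%N%:R) (N - m)%N).
Proof.
rewrite /fps_mul /fps_comp.
have W : forall i : 'I_N.+1, \sum_(m < (N - i)%N.+1) H m * fps_exp gg m (N - i)%N =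
   \sum_(m < N.+1) H m * fps_exp gg m (N - i)%N.
  move=> i; rewrite (@big_ord_widen _ _ _ (N - i)%N.+1 N.+1 (fun m => H m * fps_exp gg m (N - i)%N)) ?ltnS ?leq_subr //.
  rewrite big_mkcond /=; apply: eq_bigr => m _.
  case: ifP => // /negbT hm; rewrite -leqNgt in hm.
  by rewrite g_exp_zero ?mulr0.
under eq_bigr => i _ do rewrite W mulr_sumr.
rewrite exchange_big /=.
apply: eq_bigr => m _.
have E : fps_mul (fps_1mX_pow (- a)) (fps_exp gg m) =
  fps_scale ((- 4%:R) ^+ m) (sh m (fps_1mX_pow (- a + - (2 * m)%N%:R))).
  by rewrite g_exp fps_mulZr fps_mul_shr P_vander.
have EN := congr1 (fun f => f N) E; rewrite /= {1}/fps_mul in EN.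
transitivity (H m * \sum_(i < N.+1) fps_1mX_pow (- a) i * fps_exp gg m (N - i)%N).
  by rewrite mulr_sumr; apply: eq_bigr => i _; rewrite mulrCA.
rewrite EN /sh /fps_scale /fps_1mX_pow -ltnS ltn_ord /=.
by rewrite opprB opprK addrC.
Qed.


Lemma stepD (H T : fps C) (a : C) :
  (forall N, fps_mul (fps_1mX_pow (- a)) (fps_comp H gg) N = T N) ->
  fps_comp H gg = fps_mul (fps_1mX_pow a) T.
Proof.
move=> hT.
have -> : T = fps_mul (fps_1mX_pow (- a)) (fps_comp H gg).
  by apply: functional_extensionality => N; rewrite hT.
by rewrite fps_mulA P_vander subrr P_zero fps_mul1.
Qed.
End Comp.


Section Helpers.
Variable C : numFieldType.

Lemma poch_negN (N i : nat) : (i <= N)%N ->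
  poch (- N%:R : C) i * (N - i)`!%:R = (-1) ^+ i * N`!%:R.
Proof.
elim: i => [|i IH] hi; first by rewrite poch0 subn0 expr0 !mul1r.
have hiN : (i <= N)%N by apply: ltnW.
have := IH hiN.
have E : (N - i = (N - i.+1).+1)%N by rewrite subnSK.
rewrite E factS natrM pochS exprS => IH'.
have hn : ((N - i.+1).+1%:R : C) != 0 by rewrite pnatr_eq0.
have En : ((N - i.+1).+1%:R : C) = N%:R - i%:R by rewrite -E natrB.
rewrite En in IH' hn.
apply: (mulIf hn).
transitivity (-1 * ((-1) ^+ i * N`!%:R) * (N%:R - i%:R) : C); last by ring.
rewrite -IH'; ring.
Qed.

Lemma dup (a : C) m : poch (a / 2%:R) m * poch (2%:R^-1 + a / 2%:R) m * 4%:R ^+ m = poch a (2 * m)%N.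
Proof.
elim: m => [|m IH]; first by rewrite muln0 !poch0 expr0 !mulr1.
rewrite mulnS !add2n !pochS -IH exprS.
have h2 : (2%:R : C) != 0 by rewrite pnatr_eq0.
by rewrite -!natr1 natrM; field.
Qed.

Lemma triangle (F : nat -> nat -> C) N :
  \sum_(m < N.+1) \sum_(i < m.+1) F m i = \sum_(i < N.+1) \sum_(l < (N - i).+1) F (i + l)%N i.
Proof.
elim: N => [|N IH]; first by rewrite !big_ord1.
rewrite big_ord_recr /= IH [RHS]big_ord_recr /= subnn big_ord1 addn0.
rewrite [\sum_(i < N.+2) _]big_ord_recr /= addrA; congr (_ + _).
rewrite -big_split /=; apply: eq_bigr => i _.
have hi : (i <= N)%N by rewrite -ltnS.
rewrite subSn // [RHS]big_ord_recr /= addnS subnKC //.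
Qed.

Lemma sum_extend (Z : nat -> C) n L : (n <= L)%N -> (forall i, (n < i)%N -> Z i = 0) ->
  \sum_(i < n.+1) Z i = \sum_(i < L.+1) Z i.
Proof.
move=> nL hZ; rewrite (@big_ord_widen _ _ _ n.+1 L.+1 Z) // big_mkcond /=.
apply: eq_bigr => i _; case: ifP => // /negbT; rewrite -leqNgt => h.
by rewrite hZ.
Qed.

Lemma shift_ok (x : C) (i : nat) : (forall m : nat, x != - m%:R) -> forall m : nat, x + i%:R != - m%:R.
Proof.
move=> h m; apply/negP => /eqP E.
by have := h (m + i)%N; rewrite natrD opprD -E addrK eqxx.
Qed.

End Helpers.


Section StepC.
Variable C : numFieldType.
Variables (k : nat) (a b c : C).
Hypothesis hb : forall m : nat, b != - m%:R.
Hypothesis hc : forall m : nat, c != - m%:R.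
Hypothesis hab : forall m : nat, 1 + a - b != - m%:R.
Hypothesis hac : forall m : nat, 1 + a - c != - m%:R.

Lemma hyp3 (x y z u v : C) n : hyp_coef [:: x; y; z] [:: u; v] n =
  poch x n * poch y n * poch z n / (n`!%:R * poch u n * poch v n).
Proof. by rewrite /hyp_coef !big_cons !big_nil !mulr1 !mulrA. Qed.

Let p := 1 + a - b.
Let q := 1 + a - c.
Let e := 1 + a - b - c.

Definition AA (N m i : nat) : C := (-1) ^+ m * poch a (N + m) /
   ((N - m)`!%:R * poch p m * poch q m) * (uu (- k%:R) i * uu e (m - i)).

Lemma S1 N : \sum_(m < N.+1) hyp_coef [:: a / 2%:R; 2%:R^-1 + a / 2%:R; 1 - k%:R + a - b - c]
             [:: 1 + a - b; 1 + a - c] m * ((- 4%:R) ^+ m * uu (a + (2 * m)%N%:R) (N - m)%N)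
  = \sum_(m < N.+1) \sum_(i < m.+1) AA N m i.
Proof.
apply: eq_bigr => m _.
have hm : (m <= N)%N by rewrite -ltnS.
rewrite /AA -mulr_sumr vander_uu hyp3.
have -> : 1 - k%:R + a - b - c = - k%:R + e by rewrite /e; ring.
have D : poch a (N + m) = poch (a / 2%:R) m * poch (2%:R^-1 + a / 2%:R) m * 4%:R ^+ m
   * poch (a + (2 * m)%N%:R) (N - m).
  by rewrite dup -pochD; congr poch; rewrite mul2n -addnn -addnA subnKC // addnC.
have E4 : (- 4%:R : C) ^+ m = (-1) ^+ m * 4%:R ^+ m by rewrite -exprMn mulN1r.
rewrite D E4 /uu -/p -/q.
have h1 := @fact_neq0 C m.
have h2 := @fact_neq0 C (N - m).
have h3 : poch p m != 0 by apply: poch_neq0.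
have h4 : poch q m != 0 by apply: poch_neq0.
by field; rewrite h1 h2 h3 h4.
Qed.


Definition Ci (N i : nat) : C := (-1) ^+ i * uu (- k%:R) i * poch a (2 * i)%N /
   (poch p i * poch q i * (N - i)`!%:R).

Lemma S3 N i l : (i <= N)%N -> (l <= N - i)%N ->
  AA N (i + l) i = Ci N i * SF (a + (2 * i)%N%:R) (p + i%:R) (q + i%:R) (N - i) l.
Proof.
move=> hi hl.
rewrite /AA /Ci /SF addKn subnDA exprD (pochD p) (pochD q).
rewrite (natid1 l hi) pochD.
have -> : p + i%:R + (q + i%:R) - 1 - (a + (2 * i)%N%:R) = e by rewrite /p /q /e natrM; ring.
have hneg := poch_negN C hl.
have hM := @fact_neq0 C (N - i - l).
have ->: poch (- (N - i)%N%:R : C) l = (-1) ^+ l * (N - i)`!%:R / (N - i - l)`!%:R.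
  by apply: (mulIf hM); rewrite hneg divfK.
rewrite /uu.
have h1 := @fact_neq0 C l.
have h2 := @fact_neq0 C (N - i).
have h3 : poch p i != 0 by apply: poch_neq0.
have h4 : poch q i != 0 by apply: poch_neq0.
have h5 : poch (p + i%:R) l != 0 by apply: poch_neq0; apply: shift_ok.
have h6 : poch (q + i%:R) l != 0 by apply: poch_neq0; apply: shift_ok.
have h7 := @fact_neq0 C i.
by field; rewrite h1 h2 h3 h4 h5 h6 h7 hM.
Qed.



Definition ZZ (N i : nat) : C := hyp_coef [:: a; b; c] [:: 1 + a - b; 1 + a - c] N *
  hyp_coef [:: - N%:R; N%:R + a; - k%:R] [:: b; c] i.

Lemma S45 N i : (i <= N)%N ->
  Ci N i * \sum_(l < (N - i).+1) SF (a + (2 * i)%N%:R) (p + i%:R) (q + i%:R) (N - i) l = ZZ N i.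
Proof.
move=> hi.
set M := (N - i)%N.
have hp' := shift_ok i hab.
have hq' := shift_ok i hac.
have hpM : poch (p + i%:R) M != 0 by apply: poch_neq0.
have hqM : poch (q + i%:R) M != 0 by apply: poch_neq0.
have HS := saal (a + (2 * i)%N%:R) hp' hq' M.
have -> : \sum_(l < M.+1) SF (a + (2 * i)%N%:R) (p + i%:R) (q + i%:R) M l =
  poch (a + (2 * i)%N%:R) M * poch (1 + (a + (2 * i)%N%:R) - (p + i%:R)) M *
  poch (1 + (a + (2 * i)%N%:R) - (q + i%:R)) M / (poch (p + i%:R) M * poch (q + i%:R) M).
  by rewrite -HS mulfK // mulf_neq0.
have -> : 1 + (a + (2 * i)%N%:R) - (p + i%:R) = b + i%:R by rewrite /p natrM; ring.
have -> : 1 + (a + (2 * i)%N%:R) - (q + i%:R) = c + i%:R by rewrite /q natrM; ring.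
have EA : poch a (2 * i)%N * poch (a + (2 * i)%N%:R) M = poch a N * poch (N%:R + a) i.
  by rewrite -pochD natid2 // pochD addrC.
have EN := natid3 hi.
have Ep : poch p N = poch p i * poch (p + i%:R) M by rewrite {1}EN pochD.
have Eq : poch q N = poch q i * poch (q + i%:R) M by rewrite {1}EN pochD.
have Eb : poch b N = poch b i * poch (b + i%:R) M by rewrite {1}EN pochD.
have Ec : poch c N = poch c i * poch (c + i%:R) M by rewrite {1}EN pochD.
have hM := @fact_neq0 C M.
have hneg := poch_negN C hi.
have En : poch (- N%:R : C) i = (-1) ^+ i * N`!%:R / M`!%:R.
  by apply: (mulIf hM); rewrite hneg divfK.
rewrite /ZZ !hyp3 -/p -/q Ep Eq Eb Ec En.
rewrite /Ci.
have h1 := @fact_neq0 C i.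
have h2 := @fact_neq0 C N.
have h3 : poch p i != 0 by apply: poch_neq0.
have h4 : poch q i != 0 by apply: poch_neq0.
have h5 : poch b i != 0 by apply: poch_neq0.
have h6 : poch c i != 0 by apply: poch_neq0.
transitivity ((poch a (2 * i)%N * poch (a + (2 * i)%N%:R) M) *
  ((-1) ^+ i * uu (- k%:R) i * poch (b + i%:R) M * poch (c + i%:R) M /
   (poch p i * poch q i * M`!%:R * poch (p + i%:R) M * poch (q + i%:R) M))).
  by field; rewrite h3 h4 hM hpM hqM.
rewrite EA /uu.
by field; rewrite h1 h2 h3 h4 h5 h6 hM hpM hqM.
Qed.

Lemma stepC N : \sum_(m < N.+1) hyp_coef [:: a / 2%:R; 2%:R^-1 + a / 2%:R; 1 - k%:R + a - b - c]
             [:: 1 + a - b; 1 + a - c] m * ((- 4%:R) ^+ m * uu (a + (2 * m)%N%:R) (N - m)%N)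
  = hyp_coef [:: a; b; c] [:: 1 + a - b; 1 + a - c] N * Q2 k N a b c.
Proof.
rewrite S1 triangle.
transitivity (\sum_(i < N.+1) ZZ N i).
  apply: eq_bigr => i _; have hi : (i <= N)%N by rewrite -ltnS.
  rewrite -S45 // mulr_sumr; apply: eq_bigr => l _; apply: S3 => //.
  by rewrite -ltnS.
rewrite /Q2 mulr_sumr.
rewrite (@sum_extend _ (ZZ N) N (maxn N k)) ?leq_maxl //; last first.
  by move=> j hj; rewrite /ZZ !hyp3 poch_negn // !mul0r mulr0.
rewrite (@sum_extend _ (ZZ N) k (maxn N k)) ?leq_maxr //.
by move=> j hj; rewrite /ZZ !hyp3 (@poch_negn C k j hj) !mulr0 !mul0r mulr0.
Qed.

End StepC.


Theorem theorem1 (C : numClosedFieldType) (k : nat) (a b c : C)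
  (hb : forall m : nat, b != - m%:R)
  (hc : forall m : nat, c != - m%:R)
  (hab : forall m : nat, 1 + a - b != - m%:R)
  (hac : forall m : nat, 1 + a - c != - m%:R) :
  fps_comp
    (fps_hyp [:: a / 2%:R; 2%:R^-1 + a / 2%:R; 1 - k%:R + a - b - c]
             [:: 1 + a - b; 1 + a - c])
    (fps_scale (- 4%:R) (fps_mul (@fps_X C) (fps_1mX_pow (- 2%:R))))
  =
  fps_mul (fps_1mX_pow a)
    (fun n => hyp_coef [:: a; b; c] [:: 1 + a - b; 1 + a - c] n * Q2 k n a b c).
Proof.
apply: (@stepD C) => N.
rewrite stepB.
exact: (@stepC _ k a b c hb hc hab hac N).
Qed.
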